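(* Let $X$ be a random variable taking values in a set $\mathcal{X}$ and $Y \in [0,1]$ a target outcome. Let $\mathcal{F}$ be a class of functions $\mathcal{X} \to [0,1]$, $\alpha \ge 0$, and let $S_1, \dots, S_K$ be an $\alpha$-multicalibrated partition with respect to $\mathcal{F}$ and $Y$. Then for all $f \in \mathcal{F}$ and $k \in [K]$, $$\mathbb{E}_k\left[(Y - \mathbb{E}_k[Y])^2\right] \le \mathbb{E}_k\left[(Y - f(X))^2\right] + 2\alpha.$$
   Context: $\mathbb{E}_k$ denotes expectation conditional on $\{X \in S_k\}$ (assumed to have positive probability). A set $S \subseteq \mathcal{X}$ is $\alpha$-indistinguishable with respect to $\mathcal{F}$ and $Y$ if $|\mathrm{Cov}(f(X), Y \mid X \in S)| \le \alpha$ for all $f \in \mathcal{F}$. Sets $S_1, \dots, S_K$ form an $\alpha$-multicalibrated partition with respect to $\mathcal{F}$ and $Y$ if they partition $\mathcal{X}$ and each $S_k$ is $\alpha$-indistinguishable with respect to $\mathcal{F}$ and $Y$. *)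

(* Defs.v *)
From HB Require Import structures.
From mathcomp Require Import all_boot all_order all_algebra.
From mathcomp Require Import all_classical all_reals all_analysis.
Set Implicit Arguments. Unset Strict Implicit. Unset Printing Implicit Defensive.
Import Order.TTheory GRing.Theory Num.Theory.
Import numFieldNormedType.Exports.
Local Open Scope classical_set_scope.
Local Open Scope ring_scope.

Definition condE (d : measure_display) (T : measurableType d) (R : realType)
  (P : probability T R) (A : set T) (Z : T -> R) : R :=
  Rintegral P A Z / fine (P A).

Definition condCov (d : measure_display) (T : measurableType d) (R : realType)
  (P : probability T R) (A : set T) (Z W : T -> R) : R :=
  condE P A (fun w => Z w * W w) - condE P A Z * condE P A W.

Definition indistinguishable (d : measure_display) (T : measurableType d)
  (d' : measure_display) (Xt : measurableType d') (R : realType)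
  (P : probability T R) (X : T -> Xt) (Y : T -> R)
  (F : set (Xt -> R)) (alpha : R) (S : set Xt) : Prop :=
  forall f, F f -> `| condCov P (X @^-1` S) (f \o X) Y | <= alpha.

Definition multicalibrated_partition (d : measure_display) (T : measurableType d)
  (d' : measure_display) (Xt : measurableType d') (R : realType)
  (P : probability T R) (X : T -> Xt) (Y : T -> R)
  (F : set (Xt -> R)) (alpha : R) (K : nat) (S : 'I_K -> set Xt) : Prop :=
  [/\ (forall k, measurable (S k)),
      (forall i j, i != j -> S i `&` S j = set0),
      (\bigcup_(k in [set: 'I_K]) S k = setT) &
      (forall k, indistinguishable P X Y F alpha (S k))].

(* Main.v *)
Require Import Defs.
From HB Require Import structures.
From mathcomp Require Import all_boot all_order all_algebra.
From mathcomp Require Import all_classical all_reals all_analysis.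
From mathcomp Require Import measurable_realfun ring lra.
Import Order.TTheory GRing.Theory Num.Theory.
Local Open Scope classical_set_scope.
Local Open Scope ring_scope.
Set Implicit Arguments. Unset Strict Implicit.

Section Aux.
Context (d : measure_display) (T : measurableType d) (R : realType)
  (P : probability T R).

Definition bdd (Z : T -> R) :=
  measurable_fun setT Z /\ exists M : R, forall x, `|Z x| <= M.

Lemma bddD Z1 Z2 : bdd Z1 -> bdd Z2 -> bdd (fun w => Z1 w + Z2 w).
Proof.
move=> [m1 [M1 h1]] [m2 [M2 h2]]; split; first exact: measurable_funD.
exists (M1 + M2) => x; apply: (le_trans (ler_normD _ _)); exact: lerD.
Qed.

Lemma bddM Z1 Z2 : bdd Z1 -> bdd Z2 -> bdd (fun w => Z1 w * Z2 w).
Proof.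
move=> [m1 [M1 h1]] [m2 [M2 h2]]; split; first exact: measurable_funM.
exists (M1 * M2) => x; rewrite normrM; apply: ler_pM => //.
Qed.

Lemma bddc c : bdd (fun _ => c).
Proof. by split; [exact: measurable_cst | exists `|c|]. Qed.

Lemma bdd_int Z A : measurable A -> bdd Z -> P.-integrable A (EFin \o Z).
Proof.
move=> mA [mZ [M hM]]; apply/integrableP; split.
  apply/measurable_EFinP; exact: measurable_funS mZ.
apply: (le_lt_trans (integral_le_bound (`|M|)%:E mA _ _ _)).
- apply/measurable_EFinP; exact: measurable_funS mZ.
- by rewrite lee_fin.
- apply: aeW => x _ /=; rewrite lee_fin (le_trans (hM x))// ler_norm.
all: try done.
apply: lte_mul_pinfty => //.
by rewrite (le_lt_trans (probability_le1 P mA))// ltry.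
Qed.

Variable A : set T.
Hypothesis mA : measurable A.
Hypothesis PA : (0 < P A)%E.

Lemma fPA : 0 < fine (P A).
Proof. apply: fine_gt0; rewrite PA /=.
  by rewrite (le_lt_trans (probability_le1 P mA))// ltry. Qed.

Lemma LD Z1 Z2 : bdd Z1 -> bdd Z2 ->
  condE P A (fun w => Z1 w + Z2 w) = condE P A Z1 + condE P A Z2.
Proof.
move=> b1 b2; rewrite /condE RintegralD//; first by rewrite mulrDl.
  exact: bdd_int. exact: bdd_int.
Qed.

Lemma LZ c Z : bdd Z -> condE P A (fun w => c * Z w) = c * condE P A Z.
Proof. by move=> b; rewrite /condE RintegralZl ?mulrA//; exact: bdd_int. Qed.

Lemma Lc c : condE P A (fun _ => c) = c.
Proof. by rewrite /condE Rintegral_cst// mulfK// gt_eqF// fPA. Qed.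

Lemma Lge0 Z : (forall w, 0 <= Z w) -> 0 <= condE P A Z.
Proof.
move=> h; rewrite /condE divr_ge0 ?Rintegral_ge0//; last exact: ltW fPA.
Qed.

End Aux.

Theorem lemma1 (d : measure_display) (T : measurableType d)
  (d' : measure_display) (Xt : measurableType d') (R : realType)
  (P : probability T R) (X : T -> Xt) (Y : T -> R)
  (F : set (Xt -> R)) (alpha : R) (K : nat) (S : 'I_K -> set Xt) :
  measurable_fun setT X ->
  measurable_fun setT Y ->
  (forall w, 0 <= Y w <= 1) ->
  (forall f, F f -> measurable_fun setT f /\ forall x, 0 <= f x <= 1) ->
  0 <= alpha ->
  multicalibrated_partition P X Y F alpha S ->
  (forall k, (0 < P (X @^-1` S k))%E) ->
  forall f k, F f ->
    condE P (X @^-1` S k) (fun w => (Y w - condE P (X @^-1` S k) Y) ^+ 2)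
    <= condE P (X @^-1` S k) (fun w => (Y w - f (X w)) ^+ 2) + 2 * alpha.
Proof.
move=> mX mY hY hF a0 [mS _ _ hind] hP f k Ff.
set A := X @^-1` S k.
have mA : measurable A by have := mX measurableT _ (mS k); rewrite setTI.
have PA := hP k.
have hc := hind k f Ff; rewrite /condCov -/A in hc.
have [mf hf] := hF f Ff.
set g := f \o X.
have bY : bdd Y.
  by split => //; exists 1 => x; have /andP[? ?] := hY x; rewrite ger0_norm.
have bg : bdd g.
  split; first exact: measurableT_comp.
  by exists 1 => x; have /andP[? ?] := hf (X x); rewrite /g /= ger0_norm.
set m := condE P A Y.
have E : (fun w => (Y w - f (X w)) ^+ 2) =
  (fun w => (Y w - m) ^+ 2 + ((g w - m) ^+ 2 + ((-2) * (g w * Y w) +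
     ((2 * m) * Y w + ((2 * m) * g w + (- 2 * m ^+ 2)))))).
  by apply/funext => w; rewrite /g /=; ring.
Ltac bd := repeat first [ apply: bddD | apply: bddM | apply: bddc | assumption ].
rewrite E (@LD _ _ _ P A mA); try by rewrite /bdd; bd.
rewrite ?(@LD _ _ _ P A mA) ?(@LZ _ _ _ P A mA) ?(@Lc _ _ _ P A mA PA); try by bd.
have h2 : 0 <= condE P A (fun w => (g w - m) ^+ 2).
  by apply: (@Lge0 _ _ _ P A mA PA) => // w; rewrite sqr_ge0.
move: hc; rewrite ler_norml => /andP[h3 h4].
rewrite -/m in h3 h4.
rewrite -/m.
set t := (\int[P]_(x in A) Y x / fine (P A)).
have Em : t = m by [].
have Eg1 : condE P A (fun w => (f \o X) w * Y w) = condE P A (fun w => g w * Y w) by [].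
have Eg2 : condE P A (f \o X) = condE P A g by [].
rewrite Eg1 Eg2 in h3 h4.
rewrite Em; clear Em; clearbody t m g;
 lra.
Qed.
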